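(* Let $n,m,\ell\in\mathbb{N}$ with $\ell\geq\lceil\log_2 8n\rceil$, and let $w>1$ be a number representable with $n$ bits of which the first $m$ are its integer part. Let $b=\max\{5\ell,25\}$, let $p\in\mathbb{N}$ with $2^p>w\geq 2^{p-1}$, and let $r$ be a number with $|r-\ln 2|\leq 2^{-b}$. Then the value $\hat{z}=z_p+(p-1)r$ returned by Algorithm LN$(w,n,m,\ell)$ (described in the context, using this $r$) satisfies $$|\hat{z}-\ln w|\leq\left(\frac{3}{4}\right)^{5\ell/2}\left(m+\frac{32}{9}+2\left(\frac{32}{9}+\frac{n}{\ln 2}\right)^3\right).$$
   Context: Fixed precision representation: a number $w\ge 0$ ''given by $n$ bits of which the first $m$ correspond to its integer part'' means $w=\sum_{j=m-n}^{m-1} w^{(j)}2^j$ with $w^{(j)}\in\{0,1\}$. For $x\geq 0$, ''truncating $x$ to $b$ bits after the binary point'' means replacing $x$ by $\lfloor 2^b x\rfloor/2^b$. All arithmetic inside a step is performed exactly; only the stated truncations introduce error. Algorithm SQRT$(w,n,m,b)$ (input $w\geq 1$): if $w=1$, return $1$. Otherwise: let $p'\in\mathbb{N}$ with $2^{p'}>w\geq 2^{p'-1}$ and set $\hat{x}_0=2^{-p'}$; let $s=\lceil\log_2 b\rceil$; for $i=1,\dots,s$ compute exactly $x_i=-w\hat{x}_{i-1}^2+2\hat{x}_{i-1}$ and let $\hat{x}_i$ be $x_i$ truncated to $b$ bits after the binary point. Then let $q\in\mathbb{N}$ with $2^{1-q}>\hat{x}_s\geq 2^{-q}$ and set $\hat{y}_0=2^{\lfloor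 (q-1)/2\rfloor}$; for $j=1,\dots,s$ compute exactly $y_j=\frac12(3\hat{y}_{j-1}-\hat{x}_s\hat{y}_{j-1}^3)$ and let $\hat{y}_j$ be $y_j$ truncated to $b$ bits. Return $\hat{y}_s$. Algorithm PowerOf2Roots$(w,k,n,m,b)$: set $\hat{z}_1=$ SQRT$(w,n,m,b)$; for $i=2,\dots,k$ set $\hat{z}_i=$ SQRT$(\hat{z}_{i-1},m+b,m,b)$. Return $\hat{z}_1,\dots,\hat{z}_k$. Algorithm LN$(w,n,m,\ell)$ (input $w\geq 1$): set $b=\max\{5\ell,25\}$ and let $r$ be a $b$-bit approximation of $\ln 2$ with $|r-\ln 2|\le 2^{-b}$. If $w=1$ return $0$. Let $p\in\mathbb{N}$ with $2^p>w\geq 2^{p-1}$ and set $w_p=2^{1-p}w\in[1,2)$ (computed exactly, represented with $n$ bits of which $1$ is integer). If $w_p=1$, set $z_p=0$. Otherwise let $\hat{t}_p$ be the last output $\hat{z}_\ell$ of PowerOf2Roots$(w_p,\ell,n,1,b)$, let $\hat{y}_p$ be $(\hat{t}_p-1)-\frac12(\hat{t}_p-1)^2$ truncated to $b$ bits after the binary point, and set $z_p=2^\ell\hat{y}_p$. Return $z_p+(p-1)r$. *)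

(* Defs.v *)
From Stdlib Require Import Reals ZArith Lra Lia.
Open Scope R_scope.

(* floor and ceiling on R (Int_part r = up r - 1 is the floor of r) *)
Definition Rfloor (x : R) : Z := Int_part x.
Definition Rceil (x : R) : Z := (- Int_part (- x))%Z.
Definition log2 (x : R) : R := ln x / ln 2.

Definition trunc (b : nat) (x : R) : R := IZR (Rfloor (2 ^ b * x)) / 2 ^ b.

(* w = sum_{j=m-n}^{m-1} w^(j) 2^j with bits w^(j) in {0,1};
   the bit of index j = m-n+i is d i, for i = 0..n-1 *)
Fixpoint bitsum (d : nat -> bool) (n m : nat) (k : nat) : R :=
  match k with
  | O => 0
  | S k' => bitsum d n m k' +
            (if d k' then 1 else 0) * powerRZ 2 (Z.of_nat m - Z.of_nat n + Z.of_nat k')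
  end.
Definition fixed_repr (n m : nat) (w : R) : Prop :=
  exists d : nat -> bool, w = bitsum d n m n.

(* Algorithm SQRT(w,n,m,b).  The parameters n, m only describe the
   representation of the input and do not enter the computation. *)
Definition SQRT (w : R) (n m b : nat) : R :=
  if Req_EM_T w 1 then 1 else
  let p' : nat := (Z.to_nat (Rfloor (log2 w)) + 1)%nat in
  let x0 : R := / 2 ^ p' in
  let s : nat := Z.to_nat (Rceil (log2 (INR b))) in
  let xs : R := Nat.iter s (fun x => trunc b (- w * x ^ 2 + 2 * x)) x0 in
  let q : Z := (- Rfloor (log2 xs))%Z in
  let y0 : R := powerRZ 2 ((q - 1) / 2)%Z in
  Nat.iter s (fun y => trunc b ((3 * y - xs * y ^ 3) / 2)) y0.

(* Algorithm PowerOf2Roots(w,k,n,m,b): zhat i for i = 1..k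
   (zhat 0 = w is a convenient base case, zhat 1 = SQRT(w,n,m,b),
    zhat i = SQRT(zhat (i-1), m+b, m, b) for i >= 2). *)
Fixpoint pow2roots (w : R) (n m b : nat) (i : nat) : R :=
  match i with
  | O => w
  | S O => SQRT w n m b
  | S i' => SQRT (pow2roots w n m b i') (m + b) m b
  end.

(* Algorithm LN(w,n,m,l), with the approximation r of ln 2 as a parameter. *)
Definition LN_b (l : nat) : nat := Nat.max (5 * l) 25.

Definition LN (w : R) (n m l : nat) (r : R) : R :=
  let b := LN_b l in
  if Req_EM_T w 1 then 0 else
  let p : nat := (Z.to_nat (Rfloor (log2 w)) + 1)%nat in
  let wp : R := w / 2 ^ (p - 1) in
  let zp : R :=
    if Req_EM_T wp 1 then 0 else
    let t := pow2roots wp n 1 b l in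
    let y := trunc b ((t - 1) - / 2 * (t - 1) ^ 2) in
    2 ^ l * y in
  zp + INR (p - 1) * r.

(* Main.v *)
Require Import Defs.
From Stdlib Require Import Reals ZArith Lra Lia Psatz.
From Coquelicot Require Coquelicot.
Open Scope R_scope.


Lemma pow2_pos b : 0 < 2 ^ b.
Proof. apply pow_lt; lra. Qed.

Lemma trunc_bounds b x : x - / 2^b < trunc b x <= x.
Proof.
  unfold trunc, Rfloor. destruct (base_Int_part (2^b*x)) as [H1 H2].
  set (z := IZR (Int_part (2^b*x))) in *.
  pose proof (pow2_pos b) as P.
  split.
  - apply Rmult_lt_reg_l with (2^b); auto.
    replace (2^b * (z/2^b)) with z by (field; lra).
    replace (2^b * (x - /2^b)) with (2^b*x - 1) by (field; lra). lra.
  - apply Rmult_le_reg_l with (2^b); auto.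
    replace (2^b * (z/2^b)) with z by (field; lra). lra.
Qed.

Definition bbit b (a : R) := exists k : Z, a = IZR k / 2 ^ b.

Lemma Int_part_ge (k : Z) y : IZR k <= y -> (k <= Int_part y)%Z.
Proof.
  intros H. destruct (base_Int_part y) as [H1 H2].
  assert (IZR k - 1 < IZR (Int_part y)) by lra.
  assert (Hk: (k - 1 < Int_part y)%Z). { apply lt_IZR. rewrite minus_IZR. simpl. lra. }
  lia.
Qed.

Lemma trunc_ge b a x : bbit b a -> a <= x -> a <= trunc b x.
Proof.
  intros [k Hk] Hax. subst a. unfold trunc, Rfloor.
  pose proof (pow2_pos b) as P.
  apply Rmult_le_reg_l with (2^b); auto.
  replace (2 ^ b * (IZR k / 2 ^ b)) with (IZR k) by (field; lra).
  replace (2 ^ b * (IZR (Int_part (2 ^ b * x)) / 2 ^ b)) with (IZR (Int_part (2 ^ b * x))) by (field; lra).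
  apply IZR_le. apply Int_part_ge.
  apply Rmult_le_reg_l with (/2^b). apply Rinv_0_lt_compat; auto.
  replace (/ 2 ^ b * IZR k) with (IZR k / 2^b) by (unfold Rdiv; ring).
  replace (/ 2 ^ b * (2^b * x)) with x by (field; lra). auto.
Qed.

Lemma trunc_bbit b x : bbit b (trunc b x).
Proof. exists (Rfloor (2^b*x)). reflexivity. Qed.

Lemma one_bbit b : bbit b 1.
Proof. exists (Z.of_nat (2^b)). rewrite <- INR_IZR_INZ, pow_INR. simpl INR.
  replace (1+1) with 2 by ring. field. apply Rgt_not_eq, pow2_pos. Qed.

Lemma Int_part_eq (k : Z) y : IZR k <= y < IZR k + 1 -> Int_part y = k.
Proof.
  intros [H1 H2]. destruct (base_Int_part y) as [A B].
  assert ((Int_part y < k + 1)%Z). { apply lt_IZR. rewrite plus_IZR. simpl. lra. }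
  assert ((k - 1 < Int_part y)%Z). { apply lt_IZR. rewrite minus_IZR. simpl. lra. }
  assert ((k <= Int_part y)%Z) by (apply Int_part_ge; lra). lia.
Qed.

Lemma exp_le_mono x y : x <= y -> exp x <= exp y.
Proof. intros H. destruct (Rle_lt_or_eq_dec _ _ H). left; apply exp_increasing; auto. subst; lra. Qed.

Lemma ln2_pos : 0 < ln 2.
Proof. rewrite <- ln_1. apply ln_increasing; lra. Qed.

Lemma pow2_exp k : 2 ^ k = exp (INR k * ln 2).
Proof. rewrite <- Rpower_pow by lra. reflexivity. Qed.

Lemma INR_toZ z : (0 <= z)%Z -> INR (Z.to_nat z) = IZR z.
Proof. intros H. rewrite INR_IZR_INZ, Z2Nat.id; auto. Qed.

Lemma ln_ge0 x : 1 <= x -> 0 <= ln x.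
Proof. intros Hw. destruct (Rle_lt_or_eq_dec _ _ Hw).
    left. rewrite <- ln_1. apply ln_increasing; lra. subst; rewrite ln_1; lra. Qed.

Lemma floor_log2 w : 1 <= w ->
  (0 <= Rfloor (log2 w))%Z /\
  2 ^ (Z.to_nat (Rfloor (log2 w))) <= w < 2 ^ (S (Z.to_nat (Rfloor (log2 w)))).
Proof.
  intros Hw.
  assert (L: 0 <= log2 w). { unfold log2. apply Rmult_le_pos. now apply ln_ge0.
    left; apply Rinv_0_lt_compat, ln2_pos. }
  destruct (base_Int_part (log2 w)) as [H1 H2]. unfold Rfloor in *.
  assert (Z0: (0 <= Int_part (log2 w))%Z). { apply Int_part_ge. simpl; lra. }
  split; auto.
  rewrite !pow2_exp, S_INR, INR_toZ by auto.
  pose proof ln2_pos.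
  assert (E: w = exp (ln w)) by (symmetry; apply exp_ln; lra).
  unfold log2 in *.
  split.
  - rewrite E at 2. apply exp_le_mono. apply Rmult_le_reg_r with (/ ln 2). apply Rinv_0_lt_compat; lra.
    replace (IZR (Int_part (ln w / ln 2)) * ln 2 * / ln 2) with (IZR (Int_part (ln w / ln 2))) by (field; lra).
    exact H1.
  - rewrite E at 1. apply exp_increasing. apply Rmult_lt_reg_r with (/ ln 2). apply Rinv_0_lt_compat; lra.
    replace ((IZR (Int_part (ln w / ln 2)) + 1) * ln 2 * / ln 2) with (IZR (Int_part (ln w / ln 2)) + 1) by (field; lra).
    unfold Rdiv in H2. lra.
Qed.

Lemma floor_log2_small w : 1 <= w < 2 -> Z.to_nat (Rfloor (log2 w)) = 0%nat.
Proof.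
  intros [H1 H2]. destruct (floor_log2 w H1) as [Z0 [A B]].
  destruct (Z.to_nat (Rfloor (log2 w))) as [|k]; auto.
  exfalso. assert (2 ^ 1 <= 2 ^ S k) by (apply Rle_pow; lia || lra). simpl in *. lra.
Qed.

Lemma Rceil_ge x : x <= IZR (Rceil x).
Proof. unfold Rceil. rewrite opp_IZR. destruct (base_Int_part (-x)). lra. Qed.

Lemma s_spec b : (2 <= b)%nat ->
  let s := Z.to_nat (Rceil (log2 (INR b))) in (1 <= s)%nat /\ (b <= 2 ^ s)%nat.
Proof.
  intros Hb s.
  assert (Hb' : 2 <= INR b) by (apply (le_INR 2); auto).
  pose proof ln2_pos.
  assert (L: 1 <= log2 (INR b)). { unfold log2. apply Rmult_le_reg_r with (ln 2); auto.
    replace (ln (INR b) / ln 2 * ln 2) with (ln (INR b)) by (field; lra).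
    rewrite Rmult_1_l. destruct (Rle_lt_or_eq_dec _ _ Hb'). left; apply ln_increasing; lra.
    rewrite <- e; lra. }
  pose proof (Rceil_ge (log2 (INR b))) as C.
  assert (Z1: (1 <= Rceil (log2 (INR b)))%Z) by (apply le_IZR; lra).
  split. unfold s. lia.
  apply INR_le. rewrite pow_INR. simpl INR. replace (1+1) with 2 by ring.
  rewrite pow2_exp. unfold s. rewrite INR_toZ by lia.
  rewrite <- (exp_ln (INR b)) at 1 by lra. apply exp_le_mono.
  apply Rmult_le_reg_r with (/ ln 2). apply Rinv_0_lt_compat; lra.
  replace (IZR (Rceil (log2 (INR b))) * ln 2 * / ln 2) with (IZR (Rceil (log2 (INR b)))) by (field; lra).
  exact C.
Qed.


Lemma c_small b : (10 <= b)%nat -> 0 < / 2 ^ b <= / 1024.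
Proof.
  intros H. split. apply Rinv_0_lt_compat, pow2_pos.
  apply Rinv_le_contravar. lra. replace 1024 with (2 ^ 10) by (simpl; ring).
  apply Rle_pow; lra || lia.
Qed.

Lemma halfpow_le i : (1 <= i)%nat -> (/2) ^ (2 ^ i) <= / 4.
Proof.
  intros H. rewrite pow_inv. apply Rinv_le_contravar. lra.
  replace 4 with (2 ^ 2) by (simpl; ring). apply Rle_pow. lra.
  replace 2%nat with (2 ^ 1)%nat at 1 by reflexivity. apply Nat.pow_le_mono_r; lia.
Qed.

Lemma halfpow_sq i : ((/2) ^ (2 ^ i)) ^ 2 = (/2) ^ (2 ^ S i).
Proof. rewrite <- pow_mult. f_equal. rewrite Nat.pow_succ_r'. lia. Qed.

Lemma halfpow_final s b : (b <= 2 ^ s)%nat -> (/2) ^ (2 ^ s) <= / 2 ^ b.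
Proof.
  intros H. rewrite pow_inv. apply Rinv_le_contravar. apply pow2_pos.
  apply Rle_pow; lra || lia.
Qed.

Lemma recip_step b w x : 0 < w ->
  (1 - w*x)^2 <= 1 - w * trunc b (-w*x^2+2*x) <= (1-w*x)^2 + w * / 2^b.
Proof.
  intros Hw. destruct (trunc_bounds b (-w*x^2+2*x)) as [A B].
  set (t := trunc b (-w*x^2+2*x)) in *.
  split.
  - assert (w * t <= w * (-w*x^2+2*x)) by (apply Rmult_le_compat_l; lra). nra.
  - assert (w * (-w*x^2+2*x - /2^b) <= w * t) by (apply Rmult_le_compat_l; lra). nra.
Qed.

Lemma recip_iter b w : (10 <= b)%nat -> 1 < w < 2 -> forall i,
  let E := 1 - w * Nat.iter i (fun x => trunc b (- w * x ^ 2 + 2 * x)) (/ 2 ^ 1) in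
  0 <= E <= 1/2 /\ ((1 <= i)%nat -> E <= (/2)^(2^i) + 8 * / 2^b).
Proof.
  intros Hb Hw. destruct (c_small b Hb) as [c0 c1]. set (c := / 2^b) in *.
  induction i as [|i IH]; intros E.
  - unfold E; simpl. split. lra. lia.
  - destruct IH as [[I1 I2] I3].
    set (x := Nat.iter i (fun x => trunc b (- w * x ^ 2 + 2 * x)) (/ 2 ^ 1)) in *.
    assert (EE: E = 1 - w * trunc b (-w*x^2+2*x)) by reflexivity.
    destruct (recip_step b w x) as [R1 R2]; try lra. fold c in R2. rewrite <- EE in R1, R2.
    assert (wc : w * c <= 2 * c) by nra.
    split. split; nra.
    intros _. rewrite <- halfpow_sq.
    destruct (Nat.eq_dec i 0) as [->|Hi].
    + simpl. simpl in R1, R2. nra.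
    + assert (U := halfpow_le i ltac:(lia)). specialize (I3 ltac:(lia)).
      set (u := (/ 2) ^ 2 ^ i) in *.
      assert (0 <= u) by (unfold u; apply pow_le; lra).
      assert ((1 - w*x)^2 <= (u + 8*c)^2) by (apply pow_incr; lra).
      nra.
Qed.


Lemma isqrt_step b x y : (10 <= b)%nat -> 1/4 <= x < 1 -> 1 <= y -> bbit b y ->
  0 <= 1 - x*y^2 <= 1 ->
  let y' := trunc b ((3 * y - x * y ^ 3) / 2) in
  let f := 1 - x*y^2 in
  y <= y' /\ bbit b y' /\
  3/4*f^2 + f^3/4 <= 1 - x*y'^2 <= 3/4*f^2 + f^3/4 + 4 * / 2^b.
Proof.
  intros Hb Hx Hy Hbb Hf. cbv zeta.
  destruct (c_small b Hb) as [c0 c1]. set (c := / 2^b) in *.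
  assert (Zf : (3 * y - x * y ^ 3) / 2 = y * (2 + (1 - x*y^2)) / 2) by field.
  assert (Zid : 1 - x * ((3 * y - x * y ^ 3) / 2)^2 = 3/4*(1 - x*y^2)^2 + (1 - x*y^2)^3/4) by field.
  set (z := (3 * y - x * y ^ 3) / 2) in *.
  set (f := 1 - x*y^2) in *.
  set (y' := trunc b z).
  assert (Zy : y <= z) by (rewrite Zf; nra).
  assert (Zle : x * z^2 <= 1) by nra.
  assert (Z2 : z <= 2) by nra.
  destruct (trunc_bounds b z) as [T1 T2]. fold c y' in T1, T2.
  assert (Yy : y <= y') by (apply trunc_ge; auto).
  split; auto. split. apply trunc_bbit.
  split.
  - assert (y'^2 <= z^2) by (apply pow_incr; lra). nra.
  - assert ((z - c)^2 <= y'^2) by (apply pow_incr; lra).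
    assert (x*(z - c)^2 <= x*y'^2) by (apply Rmult_le_compat_l; lra).
    assert (x*z*c <= 2*c) by (assert (x*z <= 2) by nra; nra).
    assert (0 <= x*c^2) by nra.
    assert (x*(z-c)^2 = x*z^2 - 2*(x*z*c) + x*c^2) by ring. lra.
Qed.

Lemma isqrt_iter b x : (10 <= b)%nat -> (1 - 9 * / 2^b)/2 <= x < 1 -> forall j,
  let Y := Nat.iter j (fun y => trunc b ((3 * y - x * y ^ 3) / 2)) 1 in
  let F := 1 - x * Y^2 in
  1 <= Y /\ bbit b Y /\ 0 <= F <= 1/2 + 5 * / 2^b /\
  ((1 <= j)%nat -> F <= (/2)^(2^j) + 16 * / 2^b).
Proof.
  intros Hb Hx. destruct (c_small b Hb) as [c0 c1]. set (c := / 2^b) in *.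
  induction j as [|j IH]; intros Y F.
  - unfold F, Y; simpl. split. lra. split. apply one_bbit. split. lra. lia.
  - destruct IH as [I1 [I2 [[I3 I4] I5]]].
    set (y := Nat.iter j (fun y => trunc b ((3 * y - x * y ^ 3) / 2)) 1) in *.
    assert (YE: Y = trunc b ((3 * y - x * y ^ 3) / 2)) by reflexivity.
    destruct (isqrt_step b x y Hb ltac:(lra) I1 I2 ltac:(lra)) as [S1 [S2 [S3 S4]]].
    fold c in S4. rewrite <- YE in S1, S2, S3, S4. fold F in S3, S4.
    set (f := 1 - x * y^2) in *.
    assert (0 <= f^3) by (apply pow_le; lra).
    split. lra. split. auto.
    assert (f^3 <= f^2) by (simpl; nra).
    destruct (Nat.eq_dec j 0) as [->|Hj].
    + assert (f^2 <= (1/2+5*c)^2) by (apply pow_incr; lra).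
      assert (f^3 <= (1/2+5*c)^3) by (apply pow_incr; lra).
      split. split. nra. simpl in *. nra.
      intros _. simpl. simpl in *. nra.
    + assert (U := halfpow_le j ltac:(lia)). specialize (I5 ltac:(lia)).
      set (u := (/ 2) ^ 2 ^ j) in *.
      assert (0 <= u) by (unfold u; apply pow_le; lra).
      assert (f^2 <= (u + 16*c)^2) by (apply pow_incr; lra).
      split. split. nra. nra.
      intros _. rewrite <- halfpow_sq. fold u. nra.
Qed.


Lemma SQRT_spec w n m b : (25 <= b)%nat -> 1 <= w < 2 ->
  1 <= SQRT w n m b < 2 /\
  w * (1 - 17 * / 2^b) <= (SQRT w n m b)^2 <= w * (1 + 10 * / 2^b).
Proof.
  intros Hb Hw. assert (Hb10 : (10 <= b)%nat) by lia.
  destruct (c_small b Hb10) as [c0 c1].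
  unfold SQRT. destruct (Req_EM_T w 1) as [->|Hne].
  { set (c := / 2^b) in *. simpl. split. lra. split; nra. }
  assert (Hw' : 1 < w < 2) by (destruct Hw as [[?|?] ?]; auto; congruence || lra).
  cbv zeta. rewrite (floor_log2_small w) by lra.
  change (0 + 1)%nat with 1%nat.
  destruct (s_spec b ltac:(lia)) as [Hs1 Hs2].
  set (s := Z.to_nat (Rceil (log2 (INR b)))) in *.
  pose proof (recip_iter b w Hb10 Hw' s) as R. cbv zeta in R.
  set (xs := Nat.iter s (fun x => trunc b (- w * x ^ 2 + 2 * x)) (/ 2 ^ 1)) in *.
  set (c := / 2^b) in *.
  destruct R as [[E0 E1] E2]. specialize (E2 Hs1).
  pose proof (halfpow_final s b Hs2) as HF. fold c in HF.
  assert (Hx : (1 - 9*c)/2 <= xs < 1).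
  { assert (xs * w = 1 - (1 - w*xs)) by ring.
    split. apply Rmult_le_reg_r with (2*w). lra.
    apply Rle_trans with ((1 - 9*c)*w). nra. nra.
    apply Rmult_lt_reg_r with w. lra. nra. }
  assert (Hq : ((- Rfloor (log2 xs) - 1) / 2 = 0)%Z).
  { assert (Lx : -2 <= log2 xs < 0).
    { pose proof ln2_pos. unfold log2. split.
      - apply Rmult_le_reg_r with (ln 2); auto.
        replace (ln xs / ln 2 * ln 2) with (ln xs) by (field; lra).
        assert (ln (/4) <= ln xs).
        { destruct (Rle_lt_or_eq_dec (/4) xs) as [h|h]. lra. left; apply ln_increasing; lra.
          rewrite h; lra. }
        rewrite ln_Rinv in H0 by lra. replace 4 with (2^2) in H0 by (simpl; ring).
        rewrite ln_pow in H0 by lra. simpl in H0. lra.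
      - assert (ln xs < 0). { rewrite <- ln_1. apply ln_increasing; lra. }
        unfold Rdiv. assert (0 < / ln 2) by (apply Rinv_0_lt_compat; lra). nra. }
    unfold Rfloor. destruct (base_Int_part (log2 xs)) as [B1 B2].
    assert ((Int_part (log2 xs) < 0)%Z) by (apply lt_IZR; simpl; lra).
    assert ((-3 < Int_part (log2 xs))%Z) by (apply lt_IZR; simpl; lra).
    assert (Int_part (log2 xs) = -1 \/ Int_part (log2 xs) = -2)%Z as [-> | ->] by lia;
      reflexivity. }
  rewrite Hq. simpl powerRZ.
  pose proof (isqrt_iter b xs Hb10 Hx s) as I. cbv zeta in I.
  set (Y := Nat.iter s (fun y : R => trunc b ((3 * y - xs * y ^ 3) / 2)) 1) in *.
  destruct I as [Y1 [_ [[F0 F1] F2]]]. specialize (F2 Hs1). fold c in F1, F2.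
  assert (XW : xs * w = 1 - (1 - w*xs)) by ring.
  assert (Y2 : Y^2 <= 4) by nra.
  split. split. auto. nra.
  split.
  - assert (Y^2 * xs >= 1 - 17 * c) by nra.
    assert (Y^2 * xs * w >= (1 - 17*c) * w) by nra. nra.
  - assert (Y^2 * (1 - 9*c) <= w) by nra. nra.
Qed.


Lemma ln_le_mono x y : 0 < x -> x <= y -> ln x <= ln y.
Proof. intros H1 H2. destruct (Rle_lt_or_eq_dec _ _ H2). left; apply ln_increasing; auto. subst; lra. Qed.

Lemma ln_1p_le x : -1 < x -> ln (1 + x) <= x.
Proof. intros H. rewrite <- (ln_exp x) at 2. apply ln_le_mono. lra. apply exp_ineq1_le. Qed.

Lemma ln_1m_ge u : 0 <= u <= 1/2 -> - (2*u) <= ln (1 - u).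
Proof.
  intros H. rewrite <- (ln_exp (-(2*u))). apply ln_le_mono. apply exp_pos.
  pose proof (exp_ineq1_le (2*u)).
  assert (exp (-(2*u)) * exp (2*u) = 1) by (rewrite <- exp_plus; replace (-(2*u) + 2*u) with 0 by ring; apply exp_0).
  pose proof (exp_pos (-(2*u))). nra.
Qed.

Lemma pow2roots_S w n m b i : pow2roots w n m b (S i) = SQRT (pow2roots w n m b i) 0 0 b.
Proof. destruct i; reflexivity. Qed.

Lemma SQRT_ln w n m b : (25 <= b)%nat -> 1 <= w < 2 ->
  1 <= SQRT w n m b < 2 /\ Rabs (2 * ln (SQRT w n m b) - ln w) <= 34 * / 2^b.
Proof.
  intros Hb Hw. destruct (SQRT_spec w n m b Hb Hw) as [Y [L U]].
  destruct (c_small b ltac:(lia)) as [c0 c1].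
  set (c := / 2^b) in *. set (y := SQRT w n m b) in *.
  split; auto.
  assert (E : 2 * ln y = ln (y^2)) by (rewrite ln_pow by lra; simpl; ring).
  rewrite E.
  assert (A1 : ln (y^2) <= ln w + 10 * c).
  { apply Rle_trans with (ln (w * (1 + 10*c))). apply ln_le_mono; auto. nra.
    rewrite ln_mult by lra. pose proof (ln_1p_le (10*c) ltac:(lra)). lra. }
  assert (A2 : ln w - 34 * c <= ln (y^2)).
  { apply Rle_trans with (ln (w * (1 - 17*c))). 2: apply ln_le_mono; auto; nra.
    rewrite ln_mult by lra. pose proof (ln_1m_ge (17*c) ltac:(lra)). lra. }
  apply Rabs_le. lra.
Qed.

Lemma roots_spec wp n b : (25 <= b)%nat -> 1 <= wp < 2 -> forall i,
  1 <= pow2roots wp n 1 b i < 2 /\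
  Rabs (2^i * ln (pow2roots wp n 1 b i) - ln wp) <= 2^i * (34 * / 2^b).
Proof.
  intros Hb Hw. induction i as [|i [IH1 IH2]].
  - simpl. split; auto. rewrite Rmult_1_l. replace (ln wp - ln wp) with 0 by ring.
    rewrite Rabs_R0. destruct (c_small b ltac:(lia)). lra.
  - rewrite pow2roots_S.
    destruct (SQRT_ln (pow2roots wp n 1 b i) 0 0 b Hb IH1) as [S1 S2].
    split; auto.
    set (t := pow2roots wp n 1 b i) in *. set (t' := SQRT t 0 0 b) in *.
    set (c := / 2^b) in *.
    replace (2 ^ S i * ln t' - ln wp) with (2^i * (2 * ln t' - ln t) + (2^i * ln t - ln wp)) by (simpl; ring).
    eapply Rle_trans. apply Rabs_triang. rewrite Rabs_mult, (Rabs_right (2^i)) by (left; apply pow2_pos).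
    pose proof (pow2_pos i).
    assert (2^i * Rabs (2 * ln t' - ln t) <= 2^i * (34*c)) by (apply Rmult_le_compat_l; lra).
    simpl. lra.
Qed.

Module LSer.
Import Coquelicot.Coquelicot.

Lemma ln_series v : 0 <= v ->
  v - v^2/2 <= ln (1+v) <= v - v^2/2 + v^3/3.
Proof.
  intros Hv. destruct (Rle_lt_or_eq_dec _ _ Hv) as [Hp|H0].
  2:{ subst. replace (1+0) with 1 by ring. rewrite ln_1. simpl. lra. }
  split.
  - destruct (MVT_cor2 (fun x => ln (1+x) - x + x^2/2) (fun x => /(1+x) - 1 + x) 0 v Hp)
      as [c [Hc1 Hc2]].
    { intros c Hc. apply is_derive_Reals. auto_derive. lra. field. lra. }
    replace (1+0) with 1 in Hc1 by ring. rewrite ln_1 in Hc1.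
    assert (/(1+c) - 1 + c = c^2/(1+c)) by (field; lra).
    assert (0 <= c^2/(1+c)) by (apply Rdiv_le_0_compat; nra).
    simpl in *. nra.
  - destruct (MVT_cor2 (fun x => x - x^2/2 + x^3/3 - ln (1+x)) (fun x => 1 - x + x^2 - /(1+x)) 0 v Hp)
      as [c [Hc1 Hc2]].
    { intros c Hc. apply is_derive_Reals. auto_derive. lra. field. lra. }
    replace (1+0) with 1 in Hc1 by ring. rewrite ln_1 in Hc1.
    assert (1 - c + c^2 - /(1+c) = c^3/(1+c)) by (field; lra).
    assert (0 <= c^3/(1+c)) by (apply Rdiv_le_0_compat; [apply pow_le|]; lra).
    simpl in *. nra.
Qed.

End LSer.
Definition ln_series := LSer.ln_series.


Definition QQ (l : nat) := Rpower (3 / 4) (5 * INR l / 2).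

Lemma QQ_pos l : 0 < QQ l.
Proof. unfold QQ, Rpower. apply exp_pos. Qed.

Lemma QQ_sq l : QQ l * QQ l = (243/1024) ^ l.
Proof.
  unfold QQ. rewrite <- Rpower_plus.
  replace (5 * INR l / 2 + 5 * INR l / 2) with (INR (5 * l)) by (rewrite mult_INR; simpl; field).
  rewrite Rpower_pow by lra. rewrite pow_mult. f_equal. simpl. field.
Qed.

Lemma le_QQ l a : 0 <= a -> a * a <= (243/1024)^l -> a <= QQ l.
Proof. intros H1 H2. rewrite <- QQ_sq in H2. pose proof (QQ_pos l). nra. Qed.

Lemma c_le32 b l : (5 * l <= b)%nat -> / 2^b <= (/32)^l.
Proof.
  intros H. apply Rle_trans with (/ 2^(5*l)).
  apply Rinv_le_contravar. apply pow2_pos. apply Rle_pow; lra || lia.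
  rewrite pow_mult, pow_inv. replace (2^5) with 32 by (simpl; ring). lra.
Qed.

Lemma c_small20 b : (20 <= b)%nat -> / 2 ^ b <= / 1048576.
Proof.
  intros H. apply Rinv_le_contravar. lra. replace 1048576 with (2 ^ 20) by (simpl; ring).
  apply Rle_pow; lra || lia.
Qed.

Lemma Q_facts b l : (5 * l <= b)%nat -> (25 <= b)%nat ->
  / 2^b <= QQ l /\ 2^l * / 2^b <= QQ l /\ 2^l * / 2^b <= / 1024 /\ (/4)^l <= QQ l.
Proof.
  intros H1 H2. pose proof (c_le32 b l H1) as C. pose proof (c_small20 b ltac:(lia)) as C2.
  assert (c0 : 0 < / 2^b) by (apply Rinv_0_lt_compat, pow2_pos).
  set (c := / 2^b) in *.
  assert (P1 : (/32)^l <= (243/1024)^l) by (apply pow_incr; lra).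
  assert (P2 : 2^l * (/32)^l <= 1).
  { rewrite <- Rpow_mult_distr. rewrite <- (pow1 l). apply pow_incr. lra. }
  assert (P3 : 2^l * (/32)^l <= (243/1024)^l).
  { rewrite <- Rpow_mult_distr. apply pow_incr. lra. }
  pose proof (pow2_pos l).
  assert (X2 : (2^l*c) * (2^l*c) <= c).
  { assert (A: 2^l*2^l*(/32)^l <= 1).
    { rewrite <- !Rpow_mult_distr. rewrite <- (pow1 l). apply pow_incr. lra. }
    assert (2^l*2^l*c <= 1).
    { apply Rle_trans with (2^l*2^l*(/32)^l); auto. apply Rmult_le_compat_l; nra. }
    nra. }
  split. apply le_QQ. lra. assert (c*c <= c) by nra. lra.
  split. apply le_QQ. nra.
  { assert (2^l*c*2^l <= 2^l * (/32)^l * 2^l).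
    { apply Rmult_le_compat_r. lra. apply Rmult_le_compat_l; lra. }
    assert (2^l*(/32)^l*2^l <= (243/1024)^l).
    { rewrite <- !Rpow_mult_distr. apply pow_incr. lra. }
    assert (c <= 1) by lra. nra. }
  split. assert (0 <= 2^l*c) by nra. nra.
  apply le_QQ. apply pow_le; lra. rewrite <- Rpow_mult_distr. apply pow_incr. lra.
Qed.


Lemma bitsum_le d n m k :
  bitsum d n m k <= powerRZ 2 (Z.of_nat m - Z.of_nat n + Z.of_nat k) - powerRZ 2 (Z.of_nat m - Z.of_nat n).
Proof.
  induction k as [|k IH]; simpl bitsum.
  - rewrite Z.add_0_r. lra.
  - rewrite Nat2Z.inj_succ. unfold Z.succ.
    replace (Z.of_nat m - Z.of_nat n + (Z.of_nat k + 1))%Z with ((Z.of_nat m - Z.of_nat n + Z.of_nat k) + 1)%Z by lia.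
    assert (E: powerRZ 2 ((Z.of_nat m - Z.of_nat n + Z.of_nat k) + 1) = powerRZ 2 (Z.of_nat m - Z.of_nat n + Z.of_nat k) * 2).
    { rewrite powerRZ_add by lra. simpl. ring. }
    rewrite E.
    pose proof (powerRZ_lt 2 (Z.of_nat m - Z.of_nat n + Z.of_nat k) ltac:(lra)).
    destruct (d k); lra.
Qed.

Lemma fixed_lt n m w : fixed_repr n m w -> w < 2 ^ m.
Proof.
  intros [d ->]. eapply Rle_lt_trans. apply bitsum_le.
  replace (Z.of_nat m - Z.of_nat n + Z.of_nat n)%Z with (Z.of_nat m) by lia.
  rewrite <- pow_powerRZ. pose proof (powerRZ_lt 2 (Z.of_nat m - Z.of_nat n) ltac:(lra)). lra.
Qed.

Lemma ln2_lt1 : ln 2 < 1.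
Proof. pose proof (ln_exp 1) as E. rewrite <- E at 1. apply ln_increasing. lra.
  pose proof (exp_ineq1 1 ltac:(lra)). lra. Qed.


Theorem theorem3 (n m l : nat) (w r : R) (p : nat) :
  (Rceil (log2 (INR (8 * n))) <= Z.of_nat l)%Z ->
  fixed_repr n m w ->
  1 < w ->
  2 ^ p > w /\ w >= 2 ^ (p - 1) ->
  Rabs (r - ln 2) <= / 2 ^ (LN_b l) ->
  Rabs (LN w n m l r - ln w) <=
    Rpower (3 / 4) (5 * INR l / 2) *
      (INR m + 32 / 9 + 2 * (32 / 9 + INR n / ln 2) ^ 3).
Proof.
  intros _ Hfix Hw _ Hr.
  fold (QQ l).
  assert (Hb1 : (25 <= LN_b l)%nat) by (unfold LN_b; lia).
  assert (Hb2 : (5 * l <= LN_b l)%nat) by (unfold LN_b; lia).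
  destruct (Q_facts (LN_b l) l Hb2 Hb1) as [Q1 [Q2 [Q3 Q4]]].
  pose proof (QQ_pos l) as Q0.
  assert (CB : 32/9 + 2 * (32/9)^3 <= 32 / 9 + 2 * (32 / 9 + INR n / ln 2) ^ 3).
  { assert (0 <= INR n / ln 2) by (apply Rmult_le_pos; [apply pos_INR| left; apply Rinv_0_lt_compat, ln2_pos]).
    assert ((32/9)^3 <= (32 / 9 + INR n / ln 2) ^ 3) by (apply pow_incr; lra). lra. }
  assert (CB2 : 32/9 + 2 * (32/9)^3 >= 90) by (simpl; lra).
  unfold LN. cbv zeta.
  set (b := LN_b l) in *.
  destruct (c_small b ltac:(lia)) as [c0 c1].
  set (c := / 2^b) in *.
  destruct (Req_EM_T w 1) as [e|_]. lra.
  destruct (floor_log2 w ltac:(lra)) as [_ [K1 K2]].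
  set (K := Z.to_nat (Rfloor (log2 w))) in *.
  replace (K + 1 - 1)%nat with K by lia.
  pose proof (pow2_pos K) as PK.
  set (wp := w / 2^K).
  assert (Hwp : 1 <= wp < 2).
  { unfold wp. split. apply Rmult_le_reg_r with (2^K); auto. field_simplify; lra.
    apply Rmult_lt_reg_r with (2^K); auto. field_simplify. simpl in K2. lra. lra. }
  assert (Lw : ln w = ln wp + INR K * ln 2).
  { replace w with (wp * 2^K) at 1 by (unfold wp; field; lra).
    rewrite ln_mult by lra. rewrite ln_pow by lra. ring. }
  assert (KM : (K < m)%nat).
  { pose proof (fixed_lt n m w Hfix). destruct (le_lt_dec m K) as [h|h]; auto.
    assert (2^m <= 2^K) by (apply Rle_pow; lra || lia). lra. }
  assert (KMR : INR K <= INR m) by (apply le_INR; lia).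
  assert (RK : Rabs (INR K * r - INR K * ln 2) <= INR m * QQ l).
  { rewrite <- Rmult_minus_distr_l, Rabs_mult, Rabs_right by (apply Rle_ge, pos_INR).
    apply Rmult_le_compat; auto using pos_INR. apply Rabs_pos. lra. }
  rewrite Lw.
  destruct (Req_EM_T wp 1) as [e|ne].
  - rewrite e, ln_1.
    replace (0 + INR K * r - (0 + INR K * ln 2)) with (INR K * r - INR K * ln 2) by ring.
    eapply Rle_trans. apply RK. nra.
  - destruct (roots_spec wp n b Hb1 Hwp l) as [T1 T2].
    set (t := pow2roots wp n 1 b l) in *.
    fold c in T2.
    destruct (ln_series (t - 1) ltac:(lra)) as [L1 L2].
    replace (1 + (t - 1)) with t in L1, L2 by ring.
    destruct (trunc_bounds b ((t - 1) - / 2 * (t - 1) ^ 2)) as [U1 U2]. fold c in U1.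
    set (y := trunc b ((t - 1) - / 2 * (t - 1) ^ 2)) in *.
    set (v := t - 1) in *.
    pose proof (pow2_pos l) as Pl.
    assert (Lwp : ln wp < ln 2) by (apply ln_increasing; lra).
    assert (Lwp0 : 0 <= ln wp) by (apply ln_ge0; lra).
    pose proof ln2_lt1.
    assert (Hv : 0 <= v < 1) by (unfold v; lra).
    assert (V2 : v <= 2 * ln t) by nra.
    assert (LT : 2^l * ln t <= 1.04).
    { pose proof (Rle_abs (2 ^ l * ln t - ln wp)). nra. }
    assert (VL : 2^l * v <= 2.08) by nra.
    assert (V3 : 2^l * v^3 = (2^l * v)^3 * (/4)^l).
    { replace ((2^l * v)^3 * (/4)^l) with ((2*2*/4)^l * 2^l * v^3)
        by (rewrite !Rpow_mult_distr; simpl; ring).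
      replace (2*2*/4) with 1 by field. rewrite pow1. ring. }
    assert (V4 : (2^l * v)^3 <= 2.08^3) by (apply pow_incr; nra).
    assert (B : 0 <= 2^l * (ln t - (v - /2 * v^2)) <= 3.1 * QQ l).
    { split. apply Rmult_le_pos; lra.
      assert (2^l * (ln t - (v - /2 * v^2)) <= 2^l * v^3 / 3).
      { apply Rmult_le_reg_r with 3. lra. field_simplify. nra. }
      assert (0 <= (/4)^l) by (apply pow_le; lra).
      nra. }
    assert (A : Rabs (2^l * (y - (v - /2 * v^2))) <= QQ l).
    { rewrite Rabs_mult, Rabs_right by lra. apply Rle_trans with (2^l * c); auto.
      apply Rmult_le_compat_l. lra. apply Rabs_le. lra. }
    assert (C : Rabs (2 ^ l * ln t - ln wp) <= 34 * QQ l) by nra.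
    replace (2 ^ l * y + INR K * r - (ln wp + INR K * ln 2)) with
      (2^l * (y - (v - /2 * v^2)) - 2^l * (ln t - (v - /2 * v^2)) + (2 ^ l * ln t - ln wp) + (INR K * r - INR K * ln 2)) by ring.
    eapply Rle_trans. apply Rabs_triang.
    eapply Rle_trans. apply Rplus_le_compat_r. apply Rabs_triang.
    eapply Rle_trans. apply Rplus_le_compat_r. apply Rplus_le_compat_r. apply Rabs_triang.
    rewrite Rabs_Ropp. rewrite (Rabs_right (2^l * (ln t - (v - /2 * v^2)))) by lra.
    nra.
Qed.
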